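(* If $t\in[0,1/2]$, then $w(t,a)/W(t,a)\le \frac{68-5\sqrt{10}}{72}$ for all $a\in[(3t+2)/4,2]$.
   Context: For $(t,a)\in\mathbb R^2$ define $w_1(t,a)=(2t+3)a-(3t^2/4+t)$, $w_2(t,a)=(4t+4)a-(3t^2/2+2t+2)$, $w_3(t,a)=8ta-(3t^2+4t-4)$, $W(t,a)=[(t+2)a-(t^2/2+t)](t+2)$, and $w(t,a)=\min\{w_1(t,a),w_2(t,a),w_3(t,a)\}$. *)

(* Defs.v *)
From Stdlib Require Import Reals.
Open Scope R_scope.

Definition w1 (t a : R) : R := (2*t+3)*a - (3*t^2/4 + t).
Definition w2 (t a : R) : R := (4*t+4)*a - (3*t^2/2 + 2*t + 2).
Definition w3 (t a : R) : R := 8*t*a - (3*t^2 + 4*t - 4).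
Definition WW (t a : R) : R := ((t+2)*a - (t^2/2 + t)) * (t+2).
Definition w (t a : R) : R := Rmin (w1 t a) (Rmin (w2 t a) (w3 t a)).

(* Main.v *)
Require Import Defs.
From Stdlib Require Import Reals.
From Stdlib Require Import Lra Psatz.
Open Scope R_scope.

Lemma key (t a s : R) : s*s = 10 -> 0 < s ->
  0 <= t <= 1/2 -> (3*t+2)/4 <= a <= 2 ->
  w t a <= (68 - 5 * s) / 72 * WW t a.
Proof.
  intros Hs Hs0 [Ht0 Ht1] [Ha0 Ha1].
  assert (Hsl : 3.16 < s) by nra.
  assert (Hsu : s < 3.163) by nra.
  set (c := (68 - 5 * s) / 72).
  assert (Hts2 : t*(s*s) = t*10) by (rewrite Hs; field).
  assert (Hts3 : t*t*(s*s) = t*t*10) by (rewrite Hs; field).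
  assert (Hts4 : t*t*t*(s*s) = t*t*t*10) by (rewrite Hs; field).
  assert (Hw1 : w t a <= w1 t a) by (unfold w; apply Rmin_l).
  assert (Hw2 : w t a <= w2 t a) by (unfold w; eapply Rle_trans; [apply Rmin_r| apply Rmin_l]).
  assert (Hw3 : w t a <= w3 t a) by (unfold w; eapply Rle_trans; [apply Rmin_r| apply Rmin_r]).
  set (A := 4*t+4 - c*(t+2)^2).
  assert (HA : 0 < A) by (unfold A, c; nra).
  destruct (Rle_or_lt (9*t) (14 - 4*s)) as [Hts|Hts].
  - set (N := 6 - 2*t - 3/2*t^2).
    set (B := -(3/2*t^2+2*t+2) + c*(t+2)*(t^2/2+t)).
    set (Q1 := (20/3+5/6*s) + (-31/9 - 29/36*s)*t + (1+ s/8)*t^2 + (-17/36 + 5/144*s)*t^3).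
    assert (HQ : 0 <= Q1) by (unfold Q1; nra).
    assert (HP : A*N + (4-4*t)*B <= 0).
    { assert (H := Rmult_le_pos _ _ HQ (ltac:(lra) : 0 <= (14-4*s)/9 - t)).
      unfold A, N, B, c, Q1 in *. nra. }
    destruct (Rle_or_lt ((4-4*t)*a) N) as [Ha|Ha].
    + assert (E : (4-4*t)*(w2 t a - c*WW t a) = A*((4-4*t)*a - N) + (A*N + (4-4*t)*B))
        by (unfold w2, WW, A, N, B; field).
      assert (w2 t a - c*WW t a <= 0) by nra. lra.
    + set (A3 := 8*t - c*(t+2)^2).
      assert (HA3 : A3 < 0) by (unfold A3, c; nra).
      assert (E : (4-4*t)*(w3 t a - c*WW t a) = A3*((4-4*t)*a - N) + (A*N + (4-4*t)*B))
        by (unfold w3, WW, A, A3, N, B; field).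
      assert (w3 t a - c*WW t a <= 0) by nra. lra.
  - set (N := 2 + t + 3/4*t^2).
    set (B := -(3/2*t^2+2*t+2) + c*(t+2)*(t^2/2+t)).
    set (Q2 := (-1/9 - 7/18*s) + (5/6 - 11/24*s)*t + (11/12 - s/6)*t^2 + (17/72 - 5/288*s)*t^3).
    assert (HQ : Q2 <= 0) by (unfold Q2; nra).
    assert (HP : A*N + (1+2*t)*B <= 0).
    { assert (H := Rmult_le_pos _ _ (ltac:(lra) : 0 <= -Q2) (ltac:(lra) : 0 <= t - (14-4*s)/9)).
      unfold A, N, B, c, Q2 in *. nra. }
    destruct (Rle_or_lt ((1+2*t)*a) N) as [Ha|Ha].
    + assert (E : (1+2*t)*(w2 t a - c*WW t a) = A*((1+2*t)*a - N) + (A*N + (1+2*t)*B))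
        by (unfold w2, WW, A, N, B; field).
      assert (w2 t a - c*WW t a <= 0) by nra. lra.
    + set (A1 := 2*t+3 - c*(t+2)^2).
      assert (HA1 : A1 < 0) by (unfold A1, c; nra).
      assert (E : (1+2*t)*(w1 t a - c*WW t a) = A1*((1+2*t)*a - N) + (A*N + (1+2*t)*B))
        by (unfold w1, WW, A, A1, N, B; field).
      assert (w1 t a - c*WW t a <= 0) by nra. lra.
Qed.

Theorem lemmaA8 (t a : R) :
  0 <= t <= 1/2 -> (3*t+2)/4 <= a <= 2 ->
  w t a / WW t a <= (68 - 5 * sqrt 10) / 72.
Proof.
  intros Ht Ha.
  assert (Hs : sqrt 10 * sqrt 10 = 10) by (apply sqrt_sqrt; lra).
  assert (Hs0 : 0 < sqrt 10) by (apply sqrt_lt_R0; lra).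
  assert (HW : 0 < WW t a).
  { unfold WW. destruct Ht, Ha. nra. }
  pose proof (key t a (sqrt 10) Hs Hs0 Ht Ha) as K.
  apply (Rmult_le_reg_r (WW t a)); [lra|].
  unfold Rdiv at 1. rewrite Rmult_assoc, Rinv_l by lra. lra.
Qed.
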